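(* Let $Y^{(\infty)}$ and $Y^{*(\infty)}$ be independent sequences, both with joint distribution $P_\theta$ for the same true $\theta\in\Theta$. Let $\hat\Theta_{1-\varepsilon}(Y^{(n)})$ be Robbins' regions built with weight function $\pi$ and $\hat\Theta^*_{1-\varepsilon}(Y^{*(n')})$ Robbins' regions built with a possibly different strictly positive weight function $\pi^*$, with the same $\varepsilon\in(0,1)$. Then $$P_\theta\big(\theta\in\hat\Theta_{1-\varepsilon}(Y^{(n)})\cap\hat\Theta^*_{1-\varepsilon}(Y^{*(n')})\text{ for every }n,n'\ge1\big)\ge(1-\varepsilon)^2,$$ and in particular, for all $n,n'\ge1$, $P_\theta\big(\hat\Theta_{1-\varepsilon}(Y^{(n)})\cap\hat\Theta^*_{1-\varepsilon}(Y^{*(n')})\neq\emptyset\big)\ge(1-\varepsilon)^2$.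
   Context: The joint distribution $P_\theta$ of a sequence $(Y_1,Y_2,\ldots)$, $\theta\in\Theta\subseteq\mathbb{R}^p$, is such that $Y^{(n)}=(Y_1,\ldots,Y_n)$ has density $p_n(y^{(n)};\theta)$, strictly positive on a support not depending on $\theta$, forming a consistent family in $n$. For a strictly positive probability density $\pi$ on $\Theta$, $q_n(y^{(n)})=\int_\Theta p_n(y^{(n)};\theta)\pi(\theta)d\theta$ and Robbins' region is $\hat\Theta_{1-\varepsilon}(y^{(n)})=\{\theta\in\Theta:p_n(y^{(n)};\theta)\ge\varepsilon q_n(y^{(n)})\}$; $\hat\Theta^*$ is defined in the same way with $\pi^*$ in place of $\pi$. *)

(* Defs.v *)
From HB Require Import structures.
From mathcomp Require Import all_boot all_order all_algebra.
From mathcomp Require Import all_classical all_reals all_analysis.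

Set Implicit Arguments.
Unset Strict Implicit.
Unset Printing Implicit Defensive.

Import Order.TTheory GRing.Theory Num.Theory.
Local Open Scope classical_set_scope.
Local Open Scope ring_scope.

(* First n coordinates of the sequence y : nat -> X, i.e. y^(n) = (y_1,..,y_n)
   (the sequence is indexed from 0, so y_1 is y 0). *)
Definition obs_prefix (X : Type) (y : nat -> X) (n : nat) : n.-tuple X :=
  [tuple y (nat_of_ord i) | i < n].

Definition tuple_restr (X : Type) (n m : nat) (h : (n <= m)%N) (y : m.-tuple X)
  : n.-tuple X := [tuple tnth y (widen_ord h i) | i < n].

(* Characterisation of Lebesgue measure on R^p = p.-tuple R (product Borel
   sigma-algebra): it gives every closed box its volume.  This determines
   the measure uniquely. *)
Definition is_lebesgue_tuple (R : realType) (p : nat)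
    (lam : {measure set (p.-tuple R) -> \bar R}) : Prop :=
  forall a b : p.-tuple R, (forall i, tnth a i <= tnth b i) ->
    lam [set x | forall i, tnth a i <= tnth x i <= tnth b i]
    = (\prod_(i < p) (tnth b i - tnth a i))%:E.

Definition mixture_density (R : realType) (p : nat)
    (lam : {measure set (p.-tuple R) -> \bar R}) (Theta : set (p.-tuple R))
    (X : Type) (n : nat) (dens : n.-tuple X -> p.-tuple R -> R)
    (pi : p.-tuple R -> R) (y : n.-tuple X) : \bar R :=
  (\int[lam]_(t in Theta) (dens y t * pi t)%:E)%E.

Definition robbins_region (R : realType) (p : nat)
    (lam : {measure set (p.-tuple R) -> \bar R}) (Theta : set (p.-tuple R))
    (X : Type) (n : nat) (dens : n.-tuple X -> p.-tuple R -> R)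
    (pi : p.-tuple R -> R) (eps : R) (y : n.-tuple X) : set (p.-tuple R) :=
  [set t | Theta t /\
     (eps%:E * mixture_density lam Theta dens pi y <= (dens y t)%:E)%E].

Definition seq_sigma d (X : measurableType d) (Omega : Type)
    (Y : nat -> Omega -> X) : set (set Omega) :=
  <<s [set E | exists i (A : set X), measurable A /\ E = Y i @^-1` A] >>.

Definition weight_function (R : realType) (p : nat)
    (lam : {measure set (p.-tuple R) -> \bar R}) (Theta : set (p.-tuple R))
    (pi : p.-tuple R -> R) : Prop :=
  measurable_fun Theta pi /\ (forall t, Theta t -> 0 < pi t) /\
  (\int[lam]_(t in Theta) (pi t)%:E = 1)%E.

(* Main.v *)
Require Import Defs.
From HB Require Import structures.
From mathcomp Require Import all_boot all_order all_algebra.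
From mathcomp Require Import all_classical all_reals all_analysis.
From mathcomp Require Import lra measurable_realfun.

Import Order.TTheory GRing.Theory Num.Theory.
Local Open Scope classical_set_scope.
Local Open Scope ring_scope.

Section Core.
Context (R : realType) (p : nat) (lam : {measure set (p.-tuple R) -> \bar R})
  (Hlam : is_lebesgue_tuple lam)
  (Theta : set (p.-tuple R)) (mTheta : measurable Theta)
  (d : measure_display) (X : measurableType d)
  (mu : forall n : nat, {measure set (n.-tuple X) -> \bar R})
  (Hmu : forall n : nat, sigma_finite setT (mu n))
  (dens : forall n : nat, n.-tuple X -> p.-tuple R -> R)
  (Hdens_meas : forall n : nat, (0 < n)%N ->
     measurable_fun setT (fun z : n.-tuple X * p.-tuple R => dens n z.1 z.2))
  (Hdens_ge0 : forall n (y : n.-tuple X) t, (0 < n)%N -> Theta t -> 0 <= dens n y t)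
  (w : p.-tuple R -> R) (Hw : weight_function lam Theta w).

Lemma lam_sf : sigma_finite setT lam.
Proof.
exists (fun k : nat => [set x : p.-tuple R | forall i, - (k%:R) <= tnth x i <= k%:R]).
  apply/seteqP; split => x // _.
  exists (Num.Def.archi_bound (\sum_i `|tnth x i|)) => // i.
  rewrite -ler_norml; apply/ltW; apply: le_lt_trans (archi_boundP _); last first.
    by apply: sumr_ge0 => j _.
  rewrite (bigD1 i) //= lerDl; by apply: sumr_ge0 => j _.
move=> k; split.
  have -> : [set x : p.-tuple R | forall i, - (k%:R) <= tnth x i <= k%:R] =
    \bigcap_(i in [set: 'I_p]) ([set: p.-tuple R] `&`
       (fun x => tnth x i) @^-1` `[(- (k%:R) : R), k%:R]%classic).
    by apply/seteqP; split => x /=; [move=> H i _; split => //; rewrite /= in_itv /= H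
                                    | move=> H i; have [_ /=] := H i I; rewrite in_itv].
  apply: fin_bigcap_measurable; first exact: finite_finset.
  move=> i _; apply: (measurable_tnth i) => //; exact: measurable_itv.
have E : forall (c : R) (i : 'I_p), tnth [tuple of nseq p c] i = c.
  by move=> c i; rewrite tnth_nseq.
have -> : [set x : p.-tuple R | forall i, - (k%:R) <= tnth x i <= k%:R] =
  [set x | forall i, tnth [tuple of nseq p (- (k%:R) : R)] i <= tnth x i
                     <= tnth [tuple of nseq p (k%:R : R)] i].
  by apply/seteqP; split => x /= H i; move: (H i); rewrite !E.
rewrite Hlam; first exact: ltry.
by move=> i; rewrite !E; have := ler0n R k; lra.
Qed.

Definition lamS : set (p.-tuple R) -> \bar R := lam.
HB.instance Definition _ := Measure.on lamS.
HB.instance Definition _ := @Measure_isSigmaFinite.Build _ _ _ lamS lam_sf.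

Definition muS n : set (n.-tuple X) -> \bar R := mu n.
Arguments muS : clear implicits.
HB.instance Definition _ n := Measure.on (muS n).
HB.instance Definition _ n := @Measure_isSigmaFinite.Build _ _ _ (muS n) (Hmu n).

Definition q n (y : n.-tuple X) := mixture_density lam Theta (dens n) w y.
Arguments q : clear implicits.

Definition w' t := if t \in Theta then w t else 0.
Lemma mw' : measurable_fun setT w'.
Proof. have := (measurable_restrictT w mTheta).1 Hw.1. by []. Qed.

Lemma qE n y : q n y = (\int[lam]_t ((dens n y t * w' t)%:E))%E.
Proof.
rewrite /q /mixture_density integral_mkcond; apply: eq_integral => t _.
by rewrite /w' /patch; case: (boolP (t \in Theta)) => // _; rewrite mulr0.
Qed.

Lemma w'_ge0 t : 0 <= w' t.
Proof.
rewrite /w'; case: (boolP (t \in Theta)) => // /set_mem tT.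
by apply/ltW; apply: Hw.2.1.
Qed.

Lemma dw_ge0 n y t : (0 < n)%N -> 0 <= dens n y t * w' t.
Proof.
move=> n0; rewrite /w'; case: (boolP (t \in Theta)) => [/set_mem tT|]; last by rewrite mulr0.
by apply: mulr_ge0; [exact: Hdens_ge0 | apply/ltW; apply: Hw.2.1].
Qed.

Lemma measurable_q n : (0 < n)%N -> measurable_fun [set: n.-tuple X] (fun y : n.-tuple X => q n y).
Proof.
move=> n0.
pose Fq := fun z : n.-tuple X * p.-tuple R => ((dens n z.1 z.2 * w' z.2)%:E : \bar R).
have mFq : measurable_fun setT Fq.
  apply/measurable_EFinP; apply: measurable_funM; first exact: Hdens_meas.
  exact: (measurableT_comp (f := w') (g := snd) mw' measurable_snd).
have Fq0 : forall z, (0 <= Fq z)%E by move=> z; rewrite lee_fin dw_ge0.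
have := measurable_fun_fubini_tonelli_F (m2 := lamS) Fq mFq Fq0.
rewrite (_ : fubini_F lamS Fq = q n) //.
by apply/funext => y; rewrite qE.
Qed.

Lemma q_ge0 n y : (0 < n)%N -> (0 <= q n y)%E.
Proof. by move=> n0; rewrite qE; apply: integral_ge0 => t _; rewrite lee_fin dw_ge0. Qed.

Lemma FB n (A : set (n.-tuple X)) : (0 < n)%N -> measurable A ->
  (\int[mu n]_(y in A) q n y =
   \int[lam]_(t in Theta) ((w t)%:E * \int[mu n]_(y in A) (dens n y t)%:E))%E.
Proof.
move=> n0 mA.
pose Fz := fun z : n.-tuple X * p.-tuple R =>
  ((\1_A z.1 * dens n z.1 z.2 * w' z.2)%:E : \bar R).
have mFz : measurable_fun setT Fz.
  apply/measurable_EFinP; apply: measurable_funM; last first.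
    exact: (measurableT_comp (f := w') (g := snd) mw' measurable_snd).
  apply: measurable_funM; last exact: Hdens_meas.
  apply: measurableT_comp; [exact: measurable_indic | exact: measurable_fst].
have Fz0 : forall z, (0 <= Fz z)%E.
  move=> z; rewrite lee_fin -mulrA; apply: mulr_ge0; first by rewrite indicE.
  exact: dw_ge0.
have FT := fubini_tonelli (m1 := muS n) (m2 := lamS) Fz mFz Fz0.
transitivity (\int[mu n]_y \int[lam]_t Fz (y, t))%E.
  rewrite integral_mkcond; apply: eq_integral => y _; rewrite /patch qE.
  case: (boolP (y \in A)) => yA.
    by apply: eq_integral => t _; rewrite /Fz /= indicE yA mul1r.
  transitivity (\int[lam]_t (cst 0%R t))%E; first by rewrite integral0.
  by apply: eq_integral => t _; rewrite /Fz /= indicE (negbTE yA) !mul0r.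
transitivity (\int[lam]_t \int[mu n]_y Fz (y, t))%E; first exact: FT.
symmetry; rewrite integral_mkcond; apply: eq_integral => t _; rewrite /patch.
case: (boolP (t \in Theta)) => tT.
  rewrite integral_mkcond -ge0_integralZl_EFin //; last first.
  - by apply/ltW; apply: Hw.2.1; apply/set_mem.
  - apply/(measurable_restrictT _ mA); apply/measurable_EFinP.
    apply: measurable_funTS; exact: (measurable_fun_pair1 t (Hdens_meas n n0)).
  - by move=> y _; rewrite /patch; case: ifP => // _; rewrite lee_fin Hdens_ge0 //; apply/set_mem.
  apply: eq_integral => y _; rewrite /patch /Fz /= /w' tT indicE.
  case: (y \in A); last by rewrite mule0 !mul0r.
  by rewrite -EFinM mul1r mulrC.
transitivity (\int[mu n]_y (cst 0%R y))%E; first by rewrite integral0.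
by apply: eq_integral => y _; rewrite /Fz /= /w' (negbTE tT) mulr0.
Qed.

Context
  (Hdens_prob : forall n t, (0 < n)%N -> Theta t ->
     (\int[mu n]_y (dens n y t)%:E = 1)%E)
  (Hconsistent : forall n t (A : set (n.-tuple X)), (0 < n)%N -> Theta t ->
     measurable A ->
     (\int[mu n.+1]_(y in [set y | A (tuple_restr (leqnSn n) y)])
         (dens n.+1 y t)%:E
      = \int[mu n]_(y in A) (dens n y t)%:E)%E)
  (theta : p.-tuple R) (Htheta : Theta theta)
  (eps : R) (Heps0 : 0 < eps).

Lemma measurable_restr n m (h : (n <= m)%N) :
  measurable_fun [set: m.-tuple X] (fun y : m.-tuple X => tuple_restr h y).
Proof.
apply/measurable_fun_tnthP => i.
rewrite (_ : _ \o _ = (fun y : m.-tuple X => tnth y (widen_ord h i))).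
  exact: measurable_tnth.
by apply/funext => y /=; rewrite /tuple_restr tnth_mktuple.
Qed.

Lemma measurable_restr_set n m (h : (n <= m)%N) (A : set (n.-tuple X)) :
  measurable A -> measurable [set y : m.-tuple X | A (tuple_restr h y)].
Proof.
move=> mA; rewrite -[X in measurable X]setTI.
by apply: (measurable_restr _ _ h).
Qed.

Lemma q_cons n (A : set (n.-tuple X)) : (0 < n)%N -> measurable A ->
  (\int[mu n.+1]_(y in [set y | A (tuple_restr (leqnSn n) y)]) q n.+1 y
   = \int[mu n]_(y in A) q n y)%E.
Proof.
move=> n0 mA; rewrite FB // ?FB //; last exact: measurable_restr_set.
by apply: eq_integral => t /set_mem tT; rewrite Hconsistent.
Qed.

Lemma q_total n : (0 < n)%N -> (\int[mu n]_y q n y = 1)%E.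
Proof.
move=> n0; rewrite FB //.
rewrite -Hw.2.2; apply: eq_integral => t /set_mem tT.
by rewrite Hdens_prob // mule1.
Qed.

Lemma mdens n t : (0 < n)%N ->
  measurable_fun [set: n.-tuple X] (fun y => ((dens n y t)%:E : \bar R)).
Proof.
move=> n0; apply/measurable_EFinP; exact: (measurable_fun_pair1 t (Hdens_meas n n0)).
Qed.

Definition Gset N : set (N.+1.-tuple X) :=
  [set y | ((dens N.+1 y theta)%:E < eps%:E * q N.+1 y)%E].

Fixpoint Sset N : set (N.+1.-tuple X) :=
  match N return set (N.+1.-tuple X) with
  | 0 => Gset 0
  | M.+1 => [set y : M.+2.-tuple X | Sset M (tuple_restr (leqnSn M.+1) y)] `|`
            (Gset M.+1 `\` [set y : M.+2.-tuple X | Sset M (tuple_restr (leqnSn M.+1) y)])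
  end.

Lemma mGset N : measurable (Gset N).
Proof.
rewrite -[X in measurable X]setTI; apply: measurable_lte => //.
  exact: mdens.
by apply: measurable_funeM; exact: measurable_q.
Qed.

Lemma mSset N : measurable (Sset N).
Proof.
elim: N => [|N IH]; first exact: mGset.
apply: measurableU; first exact: measurable_restr_set.
by apply: measurableD; [exact: mGset | exact: measurable_restr_set].
Qed.

Lemma helper_le N (B : set (N.+1.-tuple X)) : measurable B -> B `<=` Gset N ->
  (\int[mu N.+1]_(y in B) (dens N.+1 y theta)%:E
   <= eps%:E * \int[mu N.+1]_(y in B) q N.+1 y)%E.
Proof.
move=> mB BG.
rewrite -(ge0_integralZl_EFin (mu N.+1) mB (fun y _ => q_ge0 N.+1 y (ltn0Sn N))
  (measurable_funTS (measurable_q _ (ltn0Sn N))) (ltW Heps0)).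
apply: ge0_le_integral => //.
- by move=> y _; rewrite lee_fin Hdens_ge0.
- by apply: measurable_funTS; exact: mdens.
- by apply: measurable_funTS; apply: measurable_funeM; exact: measurable_q.
by move=> y /BG /ltW.
Qed.

Lemma AC N : (\int[mu N.+1]_(y in Sset N) (dens N.+1 y theta)%:E
   <= eps%:E * \int[mu N.+1]_(y in Sset N) q N.+1 y)%E.
Proof.
elim: N => [|N IH]; first exact: helper_le (mGset 0) (@subset_refl _ _).
rewrite /=.
set Sp := [set y : N.+2.-tuple X | Sset N (tuple_restr (leqnSn N.+1) y)].
have mSp : measurable Sp by exact: measurable_restr_set _ _ _ _ (mSset N).
have mD : measurable (Gset N.+1 `\` Sp) by apply: measurableD => //; exact: mGset.
have dj : [disjoint Sp & Gset N.+1 `\` Sp].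
  by rewrite disj_set2E; apply/eqP; apply/seteqP; split => y //= [? []].
rewrite ge0_integral_setU //; last first.
- by move=> y _; rewrite lee_fin Hdens_ge0.
- by apply: measurable_funTS; exact: mdens.
rewrite ge0_integral_setU //; last first.
- by move=> y _; exact: q_ge0.
- by apply: measurable_funTS; exact: measurable_q.
rewrite /Sp Hconsistent // ?q_cons //; [|exact: mSset..].
rewrite ge0_muleDr; last 2 first.
- by apply: integral_ge0 => y _; exact: q_ge0.
- by apply: integral_ge0 => y _; exact: q_ge0.
apply: leeD; first exact: IH.
by apply: helper_le => // y [].
Qed.

Lemma AC2 N : (\int[mu N.+1]_(y in Sset N) (dens N.+1 y theta)%:E <= eps%:E)%E.
Proof.
apply: le_trans (AC N) _.
rewrite -[leRHS]mule1 -(q_total _ (ltn0Sn N)).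
apply: lee_wpmul2l; first by rewrite lee_fin ltW.
apply: ge0_subset_integral => //; first exact: mSset.
- exact: measurable_q.
- by move=> y _; exact: q_ge0.
Qed.

Lemma restr_obs (z : nat -> X) n m (h : (n <= m)%N) :
  tuple_restr h (obs_prefix z m) = obs_prefix z n.
Proof. by apply: eq_from_tnth => i; rewrite /tuple_restr /obs_prefix !tnth_mktuple. Qed.

Lemma Char (z : nat -> X) N : Sset N (obs_prefix z N.+1) <->
  exists2 k, (k <= N)%N & Gset k (obs_prefix z k.+1).
Proof.
elim: N => [|N IH] /=.
  split; first by exists 0%N.
  by case=> k; rewrite leqn0 => /eqP ->.
rewrite restr_obs; split.
  case=> [/IH [k kN Gk]|[Gk _]]; first by exists k => //; exact: leqW.
  by exists N.+1.
case=> k; rewrite leq_eqVlt => /orP [/eqP ->|kN] Gk.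
  by have [H|H] := pselect (Sset N (obs_prefix z N.+1)); [left|right].
by left; apply/IH; exists k.
Qed.

Context (dO : measure_display) (Omega : measurableType dO) (P : probability Omega R)
  (Z : nat -> Omega -> X) (mZ : forall i, measurable_fun setT (Z i))
  (lawZ : forall n (A : set (n.-tuple X)), (0 < n)%N -> measurable A ->
     P [set w | A (obs_prefix (fun i => Z i w) n)]
     = (\int[mu n]_(y in A) (dens n y theta)%:E)%E).

Definition badN N := [set om | Sset N (obs_prefix (fun i => Z i om) N.+1)].

Lemma P_badN N : (P (badN N) <= eps%:E)%E.
Proof. by rewrite /badN lawZ //; [exact: AC2 | exact: mSset]. Qed.

Definition Gens := [set E : set Omega | exists i (A : set X), measurable A /\ E = Z i @^-1` A].

Lemma obs_meas n : measurable_fun (T := g_sigma_algebraType Gens) setT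
  (fun om => obs_prefix (fun i => Z i om) n).
Proof.
apply/measurable_fun_tnthP => i.
rewrite (_ : _ \o _ = Z i); last first.
  by apply/funext => om /=; rewrite /obs_prefix tnth_mktuple.
move=> _ B mB; rewrite setTI; apply: sub_sigma_algebra.
by exists (nat_of_ord i), B.
Qed.

Lemma badN_sigma N : seq_sigma Z (badN N).
Proof.
have := obs_meas N.+1 measurableT _ (mSset N).
by rewrite setTI.
Qed.

Lemma seq_sigma_meas E : seq_sigma Z E -> measurable E.
Proof.
move=> H; apply: (smallest_sub (sigma_algebra_measurable Omega) _ H).
move=> _ [i [A [mA ->]]]; rewrite -[X in measurable X]setTI.
by apply: (mZ i).
Qed.

Lemma P_Bad : (P (\bigcup_N badN N) <= eps%:E)%E.
Proof.
have mb N : measurable (badN N) by apply: seq_sigma_meas; exact: badN_sigma.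
have mB : measurable (\bigcup_N badN N) by exact: bigcupT_measurable.
have homo : {homo badN : n m / (n <= m)%N >-> (n <= m)%O}.
  move=> n m nm; apply/subsetPset => om /Char [k kn Gk]; apply/Char.
  by exists k => //; exact: leq_trans kn nm.
rewrite (_ : P _ = lim ((P \o badN) x @[x --> \oo])); last first.
  by apply/esym/cvg_lim => //; apply: nondecreasing_cvg_mu.
apply: lime_le; first by apply/cvg_ex; eexists; apply: nondecreasing_cvg_mu.
by apply: nearW => N; exact: P_badN.
Qed.

Lemma core :
  seq_sigma Z [set om | forall n, (0 < n)%N ->
     robbins_region lam Theta (dens n) w eps (obs_prefix (fun i => Z i om) n) theta] /\
  measurable [set om | forall n, (0 < n)%N ->
     robbins_region lam Theta (dens n) w eps (obs_prefix (fun i => Z i om) n) theta] /\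
  ((1 - eps)%:E <= P [set om | forall n, (0 < n)%N ->
     robbins_region lam Theta (dens n) w eps (obs_prefix (fun i => Z i om) n) theta])%E.
Proof.
have -> : [set om | forall n, (0 < n)%N ->
     robbins_region lam Theta (dens n) w eps (obs_prefix (fun i => Z i om) n) theta]
   = ~` \bigcup_N badN N.
  apply/seteqP; split => om.
    move=> HG [N _ /Char [k kN Gk]].
    have [_] := HG k.+1 isT; rewrite leNgt => /negP; apply.
    exact: Gk.
  move=> HB n n0; split => //; rewrite leNgt; apply/negP => Hlt.
  apply: HB; case: n n0 Hlt => // k _ Hlt.
  by exists k => //; apply/Char; exists k.
have sB : seq_sigma Z (\bigcup_N badN N).
  by apply: sigma_algebra_bigcup => N; exact: badN_sigma.
have mB : measurable (\bigcup_N badN N) by exact: seq_sigma_meas.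
split; first exact: sigma_algebraC.
split; first exact: measurableC.
rewrite probability_setC // EFinB; apply: leeB => //; exact: P_Bad.
Qed.

End Core.



Theorem mainTheorem10
  (R : realType)
  (* parameter space Theta in R^p, with Lebesgue measure lam on R^p *)
  (p : nat) (lam : {measure set (p.-tuple R) -> \bar R})
  (Hlam : is_lebesgue_tuple lam)
  (Theta : set (p.-tuple R)) (mTheta : measurable Theta)
  (* observation space and dominating measures mu_n on X^n *)
  (d : measure_display) (X : measurableType d)
  (mu : forall n : nat, {measure set (n.-tuple X) -> \bar R})
  (Hmu : forall n : nat, sigma_finite setT (mu n))
  (* the model densities p_n(y^(n); t) *)
  (dens : forall n : nat, n.-tuple X -> p.-tuple R -> R)
  (Hdens_meas : forall n : nat, (0 < n)%N ->
     measurable_fun setT (fun z : n.-tuple X * p.-tuple R => dens n z.1 z.2))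
  (Hdens_ge0 : forall n (y : n.-tuple X) t, (0 < n)%N -> Theta t -> 0 <= dens n y t)
  (Supp : forall n : nat, set (n.-tuple X))
  (Hsupp : forall n (y : n.-tuple X) t, (0 < n)%N -> Theta t ->
     (0 < dens n y t <-> Supp n y))
  (Hdens_prob : forall n t, (0 < n)%N -> Theta t ->
     (\int[mu n]_y (dens n y t)%:E = 1)%E)
  (Hconsistent : forall n t (A : set (n.-tuple X)), (0 < n)%N -> Theta t ->
     measurable A ->
     (\int[mu n.+1]_(y in [set y | A (tuple_restr (leqnSn n) y)])
         (dens n.+1 y t)%:E
      = \int[mu n]_(y in A) (dens n y t)%:E)%E)
  (* the true parameter *)
  (theta : p.-tuple R) (Htheta : Theta theta)
  (* two independent sequences, both with joint distribution P_theta *)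
  (dO : measure_display) (Omega : measurableType dO) (P : probability Omega R)
  (Y Ystar : nat -> Omega -> X)
  (mY : forall i, measurable_fun setT (Y i))
  (mYstar : forall i, measurable_fun setT (Ystar i))
  (lawY : forall n (A : set (n.-tuple X)), (0 < n)%N -> measurable A ->
     P [set w | A (obs_prefix (fun i => Y i w) n)]
     = (\int[mu n]_(y in A) (dens n y theta)%:E)%E)
  (lawYstar : forall n (A : set (n.-tuple X)), (0 < n)%N -> measurable A ->
     P [set w | A (obs_prefix (fun i => Ystar i w) n)]
     = (\int[mu n]_(y in A) (dens n y theta)%:E)%E)
  (indep : forall E F : set Omega, seq_sigma Y E -> seq_sigma Ystar F ->
     P (E `&` F) = (P E * P F)%E)
  (* weight functions and level *)
  (pi pistar : p.-tuple R -> R)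
  (Hpi : weight_function lam Theta pi) (Hpistar : weight_function lam Theta pistar)
  (eps : R) (Heps0 : 0 < eps) (Heps1 : eps < 1) :
  (((1 - eps) ^+ 2)%:E <=
     P [set w | forall n n' : nat, (0 < n)%N -> (0 < n')%N ->
        robbins_region lam Theta (dens n) pi eps (obs_prefix (fun i => Y i w) n) theta /\
        robbins_region lam Theta (dens n') pistar eps
          (obs_prefix (fun i => Ystar i w) n') theta])%E
  /\
  (forall n n' : nat, (0 < n)%N -> (0 < n')%N ->
     exists E : set Omega, measurable E /\
       E `<=` [set w | robbins_region lam Theta (dens n) pi eps
                         (obs_prefix (fun i => Y i w) n)
                       `&` robbins_region lam Theta (dens n') pistar eps
                         (obs_prefix (fun i => Ystar i w) n') !=set0] /\
       (((1 - eps) ^+ 2)%:E <= P E)%E).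
Proof.
have [sY [mGY PY]] := core R p lam Hlam Theta mTheta d X mu Hmu dens Hdens_meas
  Hdens_ge0 pi Hpi Hdens_prob Hconsistent theta Htheta eps Heps0 dO Omega P Y mY lawY.
have [sS [mGS PS]] := core R p lam Hlam Theta mTheta d X mu Hmu dens Hdens_meas
  Hdens_ge0 pistar Hpistar Hdens_prob Hconsistent theta Htheta eps Heps0 dO Omega P
  Ystar mYstar lawYstar.
set GY := [set om | forall n, (0 < n)%N -> _] in sY mGY PY.
set GS := [set om | forall n, (0 < n)%N -> _] in sS mGS PS.
have PE : (((1 - eps) ^+ 2)%:E <= P (GY `&` GS))%E.
  rewrite indep // expr2 EFinM; apply: lee_pmul => //; rewrite lee_fin subr_ge0 ltW //.
split.
  set E := [set w | _]; suff -> : E = GY `&` GS by [].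
  apply/seteqP; split => om.
    by move=> H; split => n n0; [exact: (H n 1%N n0 isT).1 | exact: (H 1%N n isT n0).2].
  by move=> [H1 H2] n n' n0 n0'; split; [exact: H1 | exact: H2].
move=> n n' n0 n0'; exists (GY `&` GS); split; first exact: measurableI.
split => //.
by move=> om [H1 H2]; exists theta; split; [exact: H1 | exact: H2].
Qed.
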